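(* Let $d\in\{1,2,3,7,11\}$, $K=\mathbb{Q}(\sqrt{-d})$, $\mathcal{O}_d$ its ring of integers, and $\Delta$ a positive integer not of the form $\beta\bar\beta$ with $\beta\in\mathcal{O}_d$. Fix $z\in\mathbb{C}$ and a $\hat\Gamma_d$-equivalence class $\mathcal{A}\subset\mathcal{H}(\mathcal{O}_d,-\Delta)$. Put $\mathcal{A}(z)=\{h\in\mathcal{A}: a_h<0<h(z,1)\}$, $\hat{\mathcal{A}}=\{h\in\mathcal{A}: h(0,1)<0<a_h\}$, and $$\mathcal{B}(z)=\{(f,\gamma)\in\hat{\mathcal{A}}\times\hat\Gamma_d(z):\ f(\gamma(\infty),1)<0<f(\gamma(z),1)\}.$$ Then $\Phi(f,\gamma)=\bar\gamma(f)=\gamma^tf\bar\gamma$ defines a map $\Phi:\mathcal{B}(z)\to\mathcal{A}(z)$, and $\Phi$ is surjective.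
   Context: $\mathcal{H}(\mathcal{O}_d,-\Delta)$ is the set of Hermitian matrices $h=\begin{psmallmatrix}a_h&b_h\\\bar b_h&c_h\end{psmallmatrix}$ with $a_h,c_h\in\mathbb{Z}$, $b_h\in\mathcal{O}_d$ and $\det h=a_hc_h-b_h\bar b_h=-\Delta$; the associated form is $h(z,w)=a_h|z|^2+b_hz\bar w+\bar b_h\bar zw+c_h|w|^2$. $\hat\Gamma_d=\mathbf{PGL}(2,\mathcal{O}_d)$ acts by $\sigma(h)=\bar\sigma^th\sigma$. For $\gamma=\begin{psmallmatrix}r&s\\t&v\end{psmallmatrix}$, $\gamma(z)=\frac{rz+s}{tz+v}$ and $\gamma(\infty)=r/t$. Continued fraction of $z$: let $\lfloor w\rceil$ be the element of $\mathcal{O}_d$ nearest to $w$ (ties broken by a fixed rule); $z_0=z$, $\alpha_n=\lfloor z_n\rceil$, $z_{n+1}=1/(z_n-\alpha_n)$, stopping if $z_n=\alpha_n$ (this happens iff $z\in K$). Set $p_{-2}=0,p_{-1}=1,p_n=\alpha_np_{n-1}+p_{n-2}$ and $q_{-2}=1,q_{-1}=0,q_n=\alpha_nq_{n-1}+q_{n-2}$. Then $\hat\Gamma_d(z)$ is the set of matrices $\gamma_n=\begin{psmallmatrix}q_{n-2}&-p_{n-2}\\-q_{n-1}&p_{n-1}\end{psmallmatrix}$ for $n\ge1$ (for which $p_{n-1},q_{n-1}$ are defined). *)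

(* Defs.v *)
From HB Require Import structures.
From mathcomp Require Import all_boot all_order all_algebra.
From mathcomp Require Import complex.
From mathcomp Require Import reals.
Set Implicit Arguments. Unset Strict Implicit. Unset Printing Implicit Defensive.
Import Order.TTheory GRing.Theory Num.Theory.
Local Open Scope ring_scope.

Section Defs.
Variable R : realType.
Local Notation C := (R[i]).

(* Generator of the ring of integers O_d of Q(sqrt(-d)) for squarefree d > 0:
   sqrt(-d) if d = 1,2 mod 4, and (1 + sqrt(-d))/2 if d = 3 mod 4. *)
Definition omega_d (d : nat) : C :=
  if (d %% 4 == 3)%N then (1 + sqrtC (- (d%:R))) / 2 else sqrtC (- (d%:R)).

Definition inOd (d : nat) (x : C) : Prop :=
  exists a b : int, x = a%:~R + b%:~R * omega_d d.

Definition inZ (x : C) : Prop := exists a : int, x = a%:~R.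

Definition unitOd (d : nat) (u : C) : Prop :=
  inOd d u /\ exists v, inOd d v /\ u * v = 1.

(* matrices representing elements of GL(2,O_d) (PGL = GL modulo scalar units) *)
Definition inGL2 (d : nat) (g : 'M[C]_2) : Prop :=
  (forall i j, inOd d (g i j)) /\ unitOd d (\det g).

Definition inH (d : nat) (Delta : nat) (h : 'M[C]_2) : Prop :=
  inZ (h 0 0) /\ inZ (h 1 1) /\ inOd d (h 0 1) /\ h 1 0 = (h 0 1)^* /\
  \det h = - (Delta%:R).

Definition conj_mx (g : 'M[C]_2) : 'M[C]_2 := map_mx (fun x => x^*) g.

Definition act (s h : 'M[C]_2) : 'M[C]_2 := (conj_mx s)^T *m h *m s.

Definition hform (h : 'M[C]_2) (z w : C) : C :=
  h 0 0 * (z * z^*) + h 0 1 * z * w^* + h 1 0 * z^* * w + h 1 1 * (w * w^*).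

Definition eqclass (d : nat) (h0 : 'M[C]_2) : 'M[C]_2 -> Prop :=
  fun h => exists s, inGL2 d s /\ h = act s h0.

(* nearest-element rounding functions to O_d (ties broken by any fixed rule) *)
Definition nearest_round (d : nat) (rnd : C -> C) : Prop :=
  forall w, inOd d (rnd w) /\ forall b, inOd d b -> `|w - rnd w| <= `|w - b|.

(* the sequence z_n of the continued fraction; None once the algorithm stopped *)
Fixpoint cf_z (rnd : C -> C) (z : C) (n : nat) : option C :=
  match n with
  | 0 => Some z
  | n.+1 => match cf_z rnd z n with
            | Some w => if w == rnd w then None else Some (1 / (w - rnd w))
            | None => None
            end
  end.

(* alpha_n = round(z_n) (only meaningful when z_n is defined) *)
Definition cf_alpha (rnd : C -> C) (z : C) (n : nat) : C :=
  match cf_z rnd z n with Some w => rnd w | None => 0 end.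

(* cf_pq k = (p_{k-2}, p_{k-1}, q_{k-2}, q_{k-1}) *)
Fixpoint cf_pq (rnd : C -> C) (z : C) (k : nat) : C * C * C * C :=
  match k with
  | 0 => (0, 1, 1, 0)
  | k.+1 => let: (a, b, c, e) := cf_pq rnd z k in
            (b, cf_alpha rnd z k * b + a, e, cf_alpha rnd z k * e + c)
  end.

Definition cf_gamma (rnd : C -> C) (z : C) (n : nat) : 'M[C]_2 :=
  let: (pm2, pm1, qm2, qm1) := cf_pq rnd z n in
  \matrix_(i < 2, j < 2)
    (if (i == 0) && (j == 0) then qm2
     else if (i == 0) then - pm2
     else if (j == 0) then - qm1 else pm1).

(* hat-Gamma_d(z): gamma_n for n >= 1 such that p_{n-1}, q_{n-1} are defined,
   i.e. alpha_{n-1} is defined, i.e. z_{n-1} is defined *)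
Definition in_Gamma_z (rnd : C -> C) (z : C) (g : 'M[C]_2) : Prop :=
  exists n, (0 < n)%N /\ cf_z rnd z n.-1 <> None /\ g = cf_gamma rnd z n.

(* sign-correct evaluation of f(gamma(x),1) for gamma = [[r,s],[t,v]]:
   f(gamma(x),1) = f(r x + s, t x + v) / |t x + v|^2 (projective convention,
   f(infinity,1) := f(1,0)) *)
Definition f_at_gamma (f g : 'M[C]_2) (x : C) : C :=
  hform f (g 0 0 * x + g 0 1) (g 1 0 * x + g 1 1).

(* f(gamma(infinity),1), gamma(infinity) = r/t *)
Definition f_at_gamma_inf (f g : 'M[C]_2) : C :=
  hform f (g 0 0) (g 1 0).

End Defs.

(* Main.v *)
Require Import Defs.
From HB Require Import structures.
From mathcomp Require Import all_boot all_order all_algebra.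
From mathcomp Require Import complex.
From mathcomp Require Import reals.
From mathcomp Require Import ring lra zify.
Import Order.TTheory GRing.Theory Num.Theory.
Local Open Scope ring_scope.
Set Implicit Arguments. Unset Strict Implicit. Unset Printing Implicit Defensive.
Lemma ord2_cases (i : 'I_2) : i = 0 \/ i = 1.
Proof. case: i => [[|[|//]]] Hi; [left|right]; exact/val_inj. Qed.

Lemma mx2_eq (T : Type) (M N : 'M[T]_2) :
  M 0 0 = N 0 0 -> M 0 1 = N 0 1 -> M 1 0 = N 1 0 -> M 1 1 = N 1 1 -> M = N.
Proof.
move=> H00 H01 H10 H11; apply/matrixP => i j.
by case: (ord2_cases i) => ->; case: (ord2_cases j) => ->.
Qed.

Lemma sum2 (T : nmodType) (F : 'I_2 -> T) : \sum_(i < 2) F i = F 0 + F 1.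
Proof. by rewrite big_ord_recl big_ord1; congr (_ + F _); apply/val_inj. Qed.

Lemma det22 (T : comNzRingType) (M : 'M[T]_2) :
  \det M = M 0 0 * M 1 1 - M 0 1 * M 1 0.
Proof.
rewrite (expand_det_row _ 0) sum2 /cofactor !det_mx11 !mxE /=.
rewrite !expr0 !mul1r expr1 mulN1r mulrN.
have -> : lift (0 : 'I_2) (0 : 'I_1) = 1 by apply/val_inj.
have -> : lift (1 : 'I_2) (0 : 'I_1) = 0 by apply/val_inj.
done.
Qed.

Lemma mulmx22 (T : pzSemiRingType) (A B : 'M[T]_2) i j :
  (A *m B) i j = A i 0 * B 0 j + A i 1 * B 1 j.
Proof. by rewrite mxE sum2. Qed.

Section S.
Variable R : realType.
Local Notation C := (R[i]).

Lemma sqrtneg (n : nat) : (0 < n)%N ->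
  let s := sqrtC (- n%:R) : C in [/\ s ^+ 2 = - n%:R, s^* = - s & s != 0].
Proof.
move=> n0 s.
have s2 : s ^+ 2 = - n%:R by rewrite sqrtCK.
have nn0 : (n%:R : C) != 0 by rewrite pnatr_eq0 -lt0n.
have sn0 : s != 0.
  apply/eqP => s0; move: s2; rewrite s0 expr0n /= => /eqP; rewrite eq_sym oppr_eq0.
  by rewrite (negbTE nn0).
split => //.
have cs2 : (s^*) ^+ 2 = - n%:R.
  by rewrite -rmorphXn s2 rmorphN rmorph_nat.
have : (s^* - s) * (s^* + s) = 0.
  have -> : (s^* - s) * (s^* + s) = (s^*) ^+ 2 - s ^+ 2 by ring.
  by rewrite cs2 s2 subrr.
move/eqP; rewrite mulf_eq0 => /orP [|]; last first.
  by rewrite addr_eq0 => /eqP.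
rewrite subr_eq0 => /eqP cs.
have : s \is Num.real by rewrite CrealE cs.
rewrite realEsqr s2 oppr_ge0 -[X in _ <= X](mulr0n 1) ler_nat leqNgt n0 //.
Qed.

Definition dlist := [:: 1; 2; 3; 7; 11]%N.

Lemma dlist_cases d : d \in dlist -> d = 1%N \/ d = 2%N \/ d = 3%N \/ d = 7%N \/ d = 11%N.
Proof.
rewrite !inE => /orP[/eqP|/orP[/eqP|/orP[/eqP|/orP[/eqP|/eqP]]]] ->.
all: tauto.
Qed.

Lemma omega_props (d : nat) : d \in dlist ->
  exists tr m : int, (omega_d R d)^* = tr%:~R - omega_d R d /\
     omega_d R d * (omega_d R d)^* = m%:~R /\ (omega_d R d)^* != omega_d R d.
Proof.
rewrite /omega_d => /dlist_cases [->|[->|[->|[->|->]]]] /=.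
- have [s2 cs sn0] := @sqrtneg 1 isT.
  exists 0, 1; rewrite cs; split; [by rewrite sub0r|split].
    by rewrite mulrN -expr2 s2 opprK.
  by rewrite eq_sym -subr_eq0 opprK -mulr2n mulrn_eq0 negb_or sn0.
- have [s2 cs sn0] := @sqrtneg 2 isT.
  exists 0, 2; rewrite cs; split; [by rewrite sub0r|split].
    by rewrite mulrN -expr2 s2 opprK.
  by rewrite eq_sym -subr_eq0 opprK -mulr2n mulrn_eq0 negb_or sn0.
- have [s2 cs sn0] := @sqrtneg 3 isT.
  set s := sqrtC _ in s2 cs sn0 *.
  have c2 : ((2 : C)^-1)^* = 2^-1 by rewrite fmorphV rmorph_nat.
  exists 1, 1; rewrite rmorphM rmorphD /= cs conjC1 c2; split; [|split].
  + by field.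
  + have -> : (1 + s) / 2 * ((1 - s) / 2) = (1 - s^+2)/4 by field.
    by rewrite s2; field.
  + apply/negP => /eqP H; apply: (negP sn0); apply/eqP.
    have -> : s = (1 + s)/2 - (1 - s)/2 by field.
    by rewrite H subrr.
- have [s2 cs sn0] := @sqrtneg 7 isT.
  set s := sqrtC _ in s2 cs sn0 *.
  have c2 : ((2 : C)^-1)^* = 2^-1 by rewrite fmorphV rmorph_nat.
  exists 1, 2; rewrite rmorphM rmorphD /= cs conjC1 c2; split; [|split].
  + by field.
  + have -> : (1 + s) / 2 * ((1 - s) / 2) = (1 - s^+2)/4 by field.
    by rewrite s2; field.
  + apply/negP => /eqP H; apply: (negP sn0); apply/eqP.
    have -> : s = (1 + s)/2 - (1 - s)/2 by field.
    by rewrite H subrr.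
- have [s2 cs sn0] := @sqrtneg 11 isT.
  set s := sqrtC _ in s2 cs sn0 *.
  have c2 : ((2 : C)^-1)^* = 2^-1 by rewrite fmorphV rmorph_nat.
  exists 1, 3; rewrite rmorphM rmorphD /= cs conjC1 c2; split; [|split].
  + by field.
  + have -> : (1 + s) / 2 * ((1 - s) / 2) = (1 - s^+2)/4 by field.
    by rewrite s2; field.
  + apply/negP => /eqP H; apply: (negP sn0); apply/eqP.
    have -> : s = (1 + s)/2 - (1 - s)/2 by field.
    by rewrite H subrr.
Qed.
End S.

Section Od.
Variable R : realType.
Local Notation C := (R[i]).
Variable d : nat.
Hypothesis Hd : d \in dlist.
Local Notation w := (omega_d R d).
Local Notation inOd := (@inOd R d).

Lemma inOd_int (k : int) : inOd (k%:~R).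
Proof. by exists k, 0; rewrite mul0r addr0. Qed.

Lemma inOd_nat (n : nat) : inOd (n%:R).
Proof. by exists n, 0; rewrite mul0r addr0. Qed.

Lemma inOd0 : inOd 0. Proof. exact: (inOd_nat 0). Qed.
Lemma inOd1 : inOd 1. Proof. exact: (inOd_nat 1). Qed.

Lemma inOdD x y : inOd x -> inOd y -> inOd (x + y).
Proof.
move=> [a [b ->]] [c [e ->]]; exists (a + c), (b + e).
rewrite !intrD; ring.
Qed.

Lemma inOdN x : inOd x -> inOd (- x).
Proof. move=> [a [b ->]]; exists (- a), (- b); rewrite !intrN; ring. Qed.

Lemma inOdB x y : inOd x -> inOd y -> inOd (x - y).
Proof. by move=> hx hy; apply: inOdD => //; apply: inOdN. Qed.

Lemma inOdM x y : inOd x -> inOd y -> inOd (x * y).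
Proof.
have [tr [m [cw [nw _]]]] := omega_props R Hd.
have w2 : w ^+ 2 = tr%:~R * w - m%:~R by rewrite -nw cw; ring.
move=> [a [b ->]] [c [e ->]]; exists (a * c - b * e * m), (a * e + b * c + b * e * tr).
have -> : (a%:~R + b%:~R * w) * (c%:~R + e%:~R * w) =
   a%:~R * c%:~R + (a%:~R * e%:~R + b%:~R * c%:~R) * w + b%:~R * e%:~R * w ^+ 2 :> C by ring.
rewrite w2 !(intrD, intrM, intrN); ring.
Qed.

Lemma inOdJ x : inOd x -> inOd (x^*).
Proof.
have [tr [m [cw [nw _]]]] := omega_props R Hd.
move=> [a [b ->]]; exists (a + b * tr), (- b).
rewrite rmorphD rmorphM !rmorph_int /= cw !(intrD, intrM, intrN); ring.
Qed.

Lemma inOd_real x : inOd x -> x^* = x -> inZ x.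
Proof.
have [tr [m [cw [nw nr]]]] := omega_props R Hd.
move=> [a [b ->]]; rewrite rmorphD rmorphM !rmorph_int /= => H.
have : b%:~R * (w^* - w) = 0 :> C.
  by rewrite mulrBr; apply/eqP; rewrite subr_eq0; apply/eqP; apply: (addrI a%:~R).
move/eqP; rewrite mulf_eq0 subr_eq0 (negbTE nr) orbF intr_eq0 => /eqP ->.
by exists a; rewrite mul0r addr0.
Qed.

Lemma inOd_norm x : inOd x -> inZ (x * x^*).
Proof.
move=> hx; apply: inOd_real; first by apply: inOdM => //; apply: inOdJ.
by rewrite rmorphM /= conjCK mulrC.
Qed.

Lemma inZ_inOd (x : C) : inZ x -> inOd x.
Proof. by move=> [k ->]; apply: inOd_int. Qed.

Lemma int_mul_eq1 (k l : int) : 0 <= k -> 0 <= l -> k * l = 1 -> k = 1.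
Proof.
by case: k => // n; case: l => // m _ _; rewrite -PoszM => -[] /eqP; rewrite muln_eq1 => /andP [/eqP -> _].
Qed.

Lemma unit_norm (u : C) : unitOd d u -> u * u^* = 1.
Proof.
move=> [hu [v [hv uv]]].
have [k hk] := inOd_norm hu; have [l hl] := inOd_norm hv.
have kl : (k * l)%:~R = 1 :> C.
  by rewrite intrM -hk -hl; rewrite mulrACA -rmorphM /= uv rmorph1 mulr1.
have k0 : 0 <= k.
  by rewrite -(ler0z C) -hk; exact: mul_conjC_ge0. 
have l0 : 0 <= l.
  by rewrite -(ler0z C) -hl; exact: mul_conjC_ge0.
have : k * l = 1 by apply/eqP; rewrite -(eqr_int C) kl.
move=> kl1; move: hk; rewrite (int_mul_eq1 k0 l0 kl1) => hk.
by rewrite hk.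
Qed.
End Od.

Ltac pushc := rewrite ?(rmorphD, rmorphB, rmorphM, rmorphN, rmorph1, rmorph0, rmorphXn) /= ?conjCK.

Section Mx.
Variable R : realType.
Local Notation C := (R[i]).
Implicit Types (s t g h f : 'M[C]_2).


Lemma conj_mxE g i j : conj_mx g i j = (g i j)^*.
Proof. by rewrite mxE. Qed.

Lemma conj_mxM s t : conj_mx (s *m t) = conj_mx s *m conj_mx t.
Proof. by apply: mx2_eq; rewrite !(conj_mxE, mulmx22); pushc. Qed.

Lemma conj_mx1 : conj_mx (1 : 'M[C]_2) = 1.
Proof. apply: mx2_eq; rewrite /conj_mx !mxE /=; by pushc. Qed.

Lemma conj_mxK g : conj_mx (conj_mx g) = g.
Proof. by apply: mx2_eq; rewrite !conj_mxE conjCK. Qed.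

Lemma det_conj g : \det (conj_mx g) = (\det g)^*.
Proof. rewrite !det22 !conj_mxE; by pushc. Qed.

Lemma act_comp s t h : act s (act t h) = act (t *m s) h.
Proof. by rewrite /act conj_mxM trmx_mul !mulmxA. Qed.

Lemma act1 h : act 1 h = h.
Proof. by rewrite /act conj_mx1 trmx1 mul1mx mulmx1. Qed.

Lemma act_ij s h i j : act s h i j =
  (s 0 i)^* * (h 0 0 * s 0 j + h 0 1 * s 1 j) + (s 1 i)^* * (h 1 0 * s 0 j + h 1 1 * s 1 j).
Proof. by rewrite /act !mulmx22 !mxE; ring. Qed.

Lemma hform_act s h x y : hform (act s h) x y =
  hform h ((s 0 0)^* * x + (s 0 1)^* * y) ((s 1 0)^* * x + (s 1 1)^* * y).
Proof. rewrite /hform !act_ij; pushc; ring. Qed.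

Lemma act00 s h : act s h 0 0 = hform h (s 0 0)^* (s 1 0)^*.
Proof. rewrite act_ij /hform; pushc; ring. Qed.

Lemma act11 s h : act s h 1 1 = hform h (s 0 1)^* (s 1 1)^*.
Proof. rewrite act_ij /hform; pushc; ring. Qed.

Lemma hform01 h : hform h 0 1 = h 1 1.
Proof. rewrite /hform; pushc; ring. Qed.

Lemma det_act s h : \det (act s h) = (\det s)^* * \det h * \det s.
Proof. by rewrite /act !det_mulmx det_tr det_conj. Qed.

Lemma Phi_hform g f x : hform (act (conj_mx g) f) x 1 = f_at_gamma f g x.
Proof. by rewrite hform_act /f_at_gamma !conj_mxE !conjCK !mulr1. Qed.

Lemma Phi00 g f : act (conj_mx g) f 0 0 = f_at_gamma_inf f g.
Proof. by rewrite act00 /f_at_gamma_inf !conj_mxE !conjCK. Qed.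

Lemma real_neg (x : C) : x^* = x -> ~~ (0 < x) -> x != 0 -> x < 0.
Proof.
move=> xr nx x0.
have : x \is Num.real by rewrite CrealE xr.
rewrite realE => /orP [H|H].
  by move: nx; rewrite lt_def x0 H.
by rewrite lt_def eq_sym x0 H.
Qed.

Variable d : nat.
Hypothesis Hd : d \in dlist.

Lemma inGL2_mul s t : inGL2 d s -> inGL2 d t -> inGL2 d (s *m t).
Proof.
move=> [es [us [vs [hvs svs]]]] [et [ut [vt [hvt tvt]]]]; split.
  by move=> i j; rewrite mulmx22; apply: inOdD; apply: inOdM.
rewrite det_mulmx; split; first exact: inOdM.
exists (vs * vt); split; first exact: inOdM.
by rewrite mulrACA svs tvt mulr1.
Qed.

Lemma inGL2_conj s : inGL2 d s -> inGL2 d (conj_mx s).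
Proof.
move=> [es [us [vs [hvs svs]]]]; split.
  by move=> i j; rewrite conj_mxE; apply: inOdJ.
rewrite det_conj; split; first exact: inOdJ.
exists (vs^*); split; first exact: inOdJ.
by rewrite -rmorphM svs rmorph1.
Qed.

Definition goodH (Delta : nat) (h : 'M[C]_2) :=
  (forall i j, inOd d (h i j)) /\ (h 0 0)^* = h 0 0 /\ (h 1 1)^* = h 1 1 /\
  h 1 0 = (h 0 1)^* /\ \det h = - (Delta%:R).

Lemma goodH_inH Delta h : inH d Delta h -> goodH Delta h.
Proof.
move=> [[a ha] [[c hc] [hb [h10 dh]]]]; split; last first.
  by rewrite ha hc !rmorph_int; do !split.
move=> i j; case: (ord2_cases i) => ->; case: (ord2_cases j) => ->.
- by rewrite ha; apply: inOd_int.
- exact: hb.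
- by rewrite h10; apply: inOdJ.
- by rewrite hc; apply: inOd_int.
Qed.

Lemma goodH_act Delta s h : goodH Delta h -> inGL2 d s -> goodH Delta (act s h).
Proof.
move=> [eh [h00 [h11 [h10 dh]]]] hs.
have [es ds] := hs.
have h01 : (h 1 0)^* = h 0 1 by rewrite h10 conjCK.
split.
  move=> i j; rewrite act_ij.
  by do !(apply: inOdD || apply: inOdM || apply: inOdJ || apply: eh || apply: es).
split.
  by rewrite act_ij; pushc; rewrite ?h00 ?h11 ?h01 ?h10; ring.
split.
  by rewrite act_ij; pushc; rewrite ?h00 ?h11 ?h01 ?h10; ring.
split.
  by rewrite !act_ij; pushc; rewrite ?h00 ?h11 ?h01 ?h10; ring.
rewrite det_act dh.
have := unit_norm Hd ds.
move=> H; rewrite mulrC mulrA H mul1r //.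
Qed.

Lemma goodH_Z Delta f : goodH Delta f -> inZ (f 0 0) /\ inZ (f 1 1).
Proof.
move=> [ef [h00 [h11 _]]]; split; exact: (inOd_real Hd).
Qed.

Lemma goodH_nz Delta f : (forall beta : C, inOd d beta -> beta * beta^* <> Delta%:R) ->
  goodH Delta f -> f 0 0 != 0 /\ f 1 1 != 0.
Proof.
move=> Hn [ef [h00 [h11 [h10 dh]]]].
move: dh; rewrite det22 h10 => dh.
split; apply/eqP => H0; apply: (Hn (f 0 1) (ef 0 1)).
- by apply/eqP; rewrite -eqr_opp -dh H0 mul0r sub0r.
- by apply/eqP; rewrite -eqr_opp -dh H0 mulr0 sub0r.
Qed.

Lemma goodH_bound Delta f x : goodH Delta f -> f 0 0 < 0 -> hform f x 1 <= Delta%:R.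
Proof.
move=> gf a0; have [[k ek] _] := goodH_Z gf.
move: gf => [ef [h00 [h11 [h10 dh]]]].
move: dh; rewrite det22 h10 => dh.
have eD : (Delta%:R : C) = f 0 1 * (f 0 1)^* - f 0 0 * f 1 1.
  by apply/eqP; rewrite -eqr_opp opprB dh.
have key : - f 0 0 * hform f x 1 =
   Delta%:R - (f 0 0 * x + (f 0 1)^*) * (f 0 0 * x + (f 0 1)^*)^*.
  rewrite /hform h10 eD; pushc; rewrite h00; ring.
have Xr : hform f x 1 \is Num.real.
  rewrite CrealE; apply/eqP; rewrite /hform h10; pushc; rewrite h00 h11; ring.
have a1 : 1 <= - f 0 0.
  move: a0; rewrite ek ltrz0 => k0.
  by rewrite -intrN ler1z; lia.
have D0 : (0 : C) <= Delta%:R by exact: ler0n.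
move: Xr; rewrite realE => /orP [X0|X0]; last exact: le_trans X0 D0.
apply: le_trans (ler_peMl X0 a1) _.
by rewrite key gerBl mul_conjC_ge0.
Qed.

End Mx.

Section CF.
Variable R : realType.
Local Notation C := (R[i]).
Variable rnd : C -> C.
Variable z : C.

Definition P2 n := (cf_pq rnd z n).1.1.1.
Definition P1 n := (cf_pq rnd z n).1.1.2.
Definition Q2 n := (cf_pq rnd z n).1.2.
Definition Q1 n := (cf_pq rnd z n).2.
Definition al n := cf_alpha rnd z n.
Definition E n := Q1 n * z - P1 n.
Definition E' n := Q2 n * z - P2 n.

Lemma pq_S n : [/\ P2 n.+1 = P1 n, P1 n.+1 = al n * P1 n + P2 n,
   Q2 n.+1 = Q1 n & Q1 n.+1 = al n * Q1 n + Q2 n].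
Proof. by rewrite /P2 /P1 /Q2 /Q1 /al /=; case: (cf_pq rnd z n) => [[[a b] c] e]. Qed.

Lemma pq_0 : [/\ P2 0 = 0, P1 0 = 1, Q2 0 = 1 & Q1 0 = 0].
Proof. by []. Qed.

Lemma gammaE n : [/\ cf_gamma rnd z n 0 0 = Q2 n, cf_gamma rnd z n 0 1 = - P2 n,
   cf_gamma rnd z n 1 0 = - Q1 n & cf_gamma rnd z n 1 1 = P1 n].
Proof.
by rewrite /cf_gamma /P2 /P1 /Q2 /Q1; case: (cf_pq rnd z n) => [[[a b] c] e]; rewrite !mxE.
Qed.

Lemma pq_det n : P1 n * Q2 n - P2 n * Q1 n = (-1) ^+ n.
Proof.
elim: n => [|n IH]; first by have [-> -> -> ->] := pq_0; rewrite expr0; ring.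
have [-> -> -> ->] := pq_S n; rewrite exprS -IH; ring.
Qed.

Lemma E_S n : E' n.+1 = E n /\ E n.+1 = al n * E n + E' n.
Proof. rewrite /E /E'; have [-> -> -> ->] := pq_S n; split; ring. Qed.

Lemma cf_z_S n : cf_z rnd z n.+1 =
  match cf_z rnd z n with
  | Some w => if w == rnd w then None else Some (1 / (w - rnd w))
  | None => None end.
Proof. by []. Qed.

Lemma cf_z_down n : cf_z rnd z n.+1 <> None -> cf_z rnd z n <> None.
Proof. by rewrite cf_z_S; case: (cf_z rnd z n). Qed.

Lemma al_some n w : cf_z rnd z n = Some w -> al n = rnd w.
Proof. by rewrite /al /cf_alpha => ->. Qed.

Lemma E_rel n w : cf_z rnd z n = Some w -> E' n = - w * E n.
Proof.
elim: n w => [|n IH] w.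
  by move=> [<-]; rewrite /E /E'; have [-> -> -> ->] := pq_0; ring.
rewrite cf_z_S; case e: (cf_z rnd z n) => [w0|] //.
case: eqP => // hne [<-].
have [-> ->] := E_S n; rewrite (al_some e) (IH _ e).
have hn : w0 - rnd w0 != 0 by rewrite subr_eq0; apply/eqP.
by field.
Qed.

Lemma E_step n w : cf_z rnd z n = Some w -> E n.+1 = - (w - rnd w) * E n.
Proof.
move=> e; have [_ ->] := E_S n; rewrite (al_some e) (E_rel e); ring.
Qed.

Variable d : nat.
Hypothesis Hd : d \in dlist.
Hypothesis Hrnd : nearest_round d rnd.

Lemma al_Od n : inOd d (al n).
Proof.
rewrite /al /cf_alpha; case: (cf_z rnd z n) => [w|]; first exact: (Hrnd w).1.
exact: inOd0.
Qed.

Lemma pq_Od n : [/\ inOd d (P2 n), inOd d (P1 n), inOd d (Q2 n) & inOd d (Q1 n)].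
Proof.
elim: n => [|n [h1 h2 h3 h4]].
  have [-> -> -> ->] := pq_0; split; [exact: inOd0|exact: inOd1|exact: inOd1|exact: inOd0].
have [-> -> -> ->] := pq_S n; split => //.
  by apply: inOdD => //; apply: (inOdM Hd) => //; apply: al_Od.
by apply: inOdD => //; apply: (inOdM Hd) => //; apply: al_Od.
Qed.

Lemma gamma_GL n : inGL2 d (cf_gamma rnd z n).
Proof.
have [g00 g01 g10 g11] := gammaE n; have [h1 h2 h3 h4] := pq_Od n.
split.
  move=> i j; case: (ord2_cases i) => ->; case: (ord2_cases j) => ->;
  rewrite ?g00 ?g01 ?g10 ?g11 //; exact: inOdN.
rewrite det22 g00 g01 g10 g11.
have -> : Q2 n * P1 n - - P2 n * - Q1 n = (-1) ^+ n by rewrite -pq_det; ring.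
split; first by rewrite -signr_odd; case: (odd n); rewrite ?expr1 ?expr0;
  [apply: inOdN; exact: inOd1 | exact: inOd1].
exists ((-1) ^+ n); split; last by rewrite -exprMn mulrNN mulr1 expr1n.
by rewrite -signr_odd; case: (odd n); rewrite ?expr1 ?expr0;
  [apply: inOdN; exact: inOd1 | exact: inOd1].
Qed.

End CF.

Section Cover.
Variable R : realType.
Local Notation C := (R[i]).

Lemma round_sq (t : R) : exists k : int, (t - k%:~R) ^+ 2 <= 1 / 4.
Proof.
exists (Num.floor (t + 1/2)).
have h1 := floor_le (t + 1/2).
have h2 := floorD1_gt (t + 1/2).
rewrite intrD in h2.
set k := (Num.floor (t + 1/2))%:~R in h1 h2 *.
nra.
Qed.

Lemma cover_gen (wr wi : R) : wi != 0 -> wi ^+ 2 <= 11 / 4 -> forall x y : R,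
  exists m n : int, (x - (m%:~R + n%:~R * wr)) ^+ 2 + (y - n%:~R * wi) ^+ 2 <= 15 / 16.
Proof.
move=> wi0 hb x y.
have [n hn] := round_sq (y / wi).
have [m hm] := round_sq (x - n%:~R * wr).
exists m, n.
have e1 : (y - n%:~R * wi) ^+ 2 = wi ^+ 2 * (y / wi - n%:~R) ^+ 2 by field.
have e2 : (x - (m%:~R + n%:~R * wr)) = (x - n%:~R * wr - m%:~R) by ring.
rewrite e1 e2.
have : wi ^+ 2 * (y / wi - n%:~R) ^+ 2 <= 11/4 * (1/4).
  apply: ler_pM => //; first exact: sqr_ge0.
  exact: sqr_ge0.
lra.
Qed.

Lemma complex_int (k : int) : (k%:~R : C) = Complex (k%:~R) 0.
Proof. by rewrite -(rmorph_int (@real_complex R) k). Qed.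

Lemma normC_cplx (a b : R) : (Complex a b : C) * (Complex a b)^* = Complex (a ^+ 2 + b ^+ 2) 0.
Proof. by rewrite /= ; congr Complex; ring. Qed.

Lemma sqrt_coords (n : nat) : (0 < n)%N ->
  exists beta : R, (sqrtC (- n%:R) : C) = Complex 0 beta /\ beta ^+ 2 = n%:R.
Proof.
move=> n0; have [s2 cs _] := @sqrtneg R n n0.
move: s2 cs; case: (sqrtC _) => a b s2 cs.
have a0 : a = 0.
  move: cs => /= [] /eqP; rewrite -subr_eq0 opprK -mulr2n mulrn_eq0 /= => /eqP //.
subst a; exists b; split => //.
move: s2; rewrite expr2 /= -(rmorph_nat (@real_complex R) n) /=.
case=> + _; rewrite mul0r sub0r => /oppr_inj <-; by rewrite expr2.
Qed.

Lemma omega_coords d : d \in dlist ->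
  exists wr wi : R, omega_d R d = Complex wr wi /\ wi != 0 /\ wi ^+ 2 <= 11 / 4.
Proof.
have h2 : (2 : C)^-1 = Complex (2^-1) 0.
  by rewrite -(rmorph_nat (@real_complex R) 2) -fmorphV.
rewrite /omega_d => /dlist_cases [->|[->|[->|[->|->]]]] /=.
- have [b [-> hb]] := @sqrt_coords 1 isT.
  exists 0, b; split => //; split; last by rewrite hb; lra.
  by apply/eqP => b0; move: hb; rewrite b0 expr0n /= => /eqP; rewrite eq_sym oner_eq0.
- have [b [-> hb]] := @sqrt_coords 2 isT.
  exists 0, b; split => //; split; last by rewrite hb; lra.
  by apply/eqP => b0; move: hb; rewrite b0 expr0n /= => /eqP; rewrite eq_sym pnatr_eq0.
- have [b [-> hb]] := @sqrt_coords 3 isT.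
  exists (2^-1), (b / 2); rewrite h2; split.
    apply/eqP; rewrite eq_complex /=; apply/andP; split; apply/eqP; ring.
  split; last by rewrite expr_div_n hb; lra.
  rewrite mulf_eq0 negb_or invr_eq0 pnatr_eq0 andbT.
  by apply/eqP => b0; move: hb; rewrite b0 expr0n /= => /eqP; rewrite eq_sym pnatr_eq0.
- have [b [-> hb]] := @sqrt_coords 7 isT.
  exists (2^-1), (b / 2); rewrite h2; split.
    apply/eqP; rewrite eq_complex /=; apply/andP; split; apply/eqP; ring.
  split; last by rewrite expr_div_n hb; lra.
  rewrite mulf_eq0 negb_or invr_eq0 pnatr_eq0 andbT.
  by apply/eqP => b0; move: hb; rewrite b0 expr0n /= => /eqP; rewrite eq_sym pnatr_eq0.
- have [b [-> hb]] := @sqrt_coords 11 isT.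
  exists (2^-1), (b / 2); rewrite h2; split.
    apply/eqP; rewrite eq_complex /=; apply/andP; split; apply/eqP; ring.
  split; last by rewrite expr_div_n hb; lra.
  rewrite mulf_eq0 negb_or invr_eq0 pnatr_eq0 andbT.
  by apply/eqP => b0; move: hb; rewrite b0 expr0n /= => /eqP; rewrite eq_sym pnatr_eq0.
Qed.

Lemma cover d : d \in dlist -> forall w : C,
  exists b, inOd d b /\ (w - b) * (w - b)^* <= 15%:R / 16%:R.
Proof.
move=> Hd [x y].
have [wr [wi [ew [wi0 hwi]]]] := omega_coords Hd.
have [m [n H]] := cover_gen wr wi0 hwi x y.
exists (m%:~R + n%:~R * omega_d R d); split; first by exists m, n.
rewrite ew !complex_int.
have -> : (Complex x y - (Complex m%:~R 0 + Complex n%:~R 0 * Complex wr wi) : C) =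
   Complex (x - (m%:~R + n%:~R * wr)) (y - n%:~R * wi).
  by apply/eqP; rewrite eq_complex /=; apply/andP; split; apply/eqP; ring.
rewrite normC_cplx.
have -> : (15%:R / 16%:R : C) = Complex (15 / 16) 0.
  by rewrite -!(rmorph_nat (@real_complex R)) -fmorph_div.
by rewrite lecE /= eqxx.
Qed.

End Cover.

Section Bound.
Variable R : realType.
Local Notation C := (R[i]).
Variable rnd : C -> C.
Variable z : C.
Variable d : nat.
Hypothesis Hd : d \in dlist.
Hypothesis Hrnd : nearest_round d rnd.
Local Notation rho := (15%:R / 16%:R : C).

Lemma rnd_cover w : (w - rnd w) * (w - rnd w)^* <= rho.
Proof.
have [b [hb Hb]] := cover Hd w.
apply: le_trans Hb.
rewrite -!normCK !expr2.
have h := (Hrnd w).2 b hb.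
by apply: ler_pM => //; exact: normr_ge0.
Qed.

Lemma E_bound n : (exists N w, cf_z rnd z N = Some w /\ w = rnd w) \/
  (cf_z rnd z n <> None /\ E rnd z n * (E rnd z n)^* <= rho ^+ n).
Proof.
elim: n => [|n IH].
  right; split => //.
  rewrite /E; have [_ -> _ ->] := pq_0 rnd z.
  by rewrite mul0r sub0r rmorphN rmorph1 mulrNN mulr1 expr0.
case: IH => [IH|[IH1 IH2]]; first by left.
case e: (cf_z rnd z n) IH1 => [w|] // _.
case: (eqVneq w (rnd w)) => hw; first by left; exists n, w.
right; split; first by rewrite cf_z_S e (negbTE hw).
rewrite (E_step e) exprS.
have -> : - (w - rnd w) * E rnd z n * (- (w - rnd w) * E rnd z n)^* =
  ((w - rnd w) * (w - rnd w)^*) * (E rnd z n * (E rnd z n)^*).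
  rewrite !rmorphM rmorphN /=; ring.
apply: ler_pM => //; [exact: mul_conjC_ge0 | exact: mul_conjC_ge0 | exact: rnd_cover].
Qed.

End Bound.

Section Arch.
Variable R : realType.
Local Notation C := (R[i]).

Lemma bern (n : nat) : 1 + n%:R / 15 <= (16 / 15 : R) ^+ n.
Proof.
elim: n => [|n IH]; first by rewrite expr0 mul0r addr0.
rewrite exprS -natr1.
have h0 : (0 : R) <= n%:R by exact: ler0n.
nra.
Qed.

Lemma small_pow (D v : R) : 0 < v -> exists n, (15 / 16) ^+ n * D < v.
Proof.
move=> v0; exists (Num.truncn (15 * D / v)).+1.
set n := (Num.truncn _).+1.
have h1 : 15 * D / v < n%:R by exact: truncnS_gt.
have h2 := bern n.
have e : (15 / 16 : R) ^+ n * (16 / 15) ^+ n = 1.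
  by rewrite -exprMn (_ : 15 / 16 * (16 / 15) = 1 :> R) ?expr1n //; field.
have p0 : (0 : R) < (15 / 16) ^+ n by apply: exprn_gt0; lra.
have hD : D < v * (16 / 15) ^+ n.
  have : D < v * (1 + n%:R / 15).
    have h3 : 15 * D < n%:R * v by rewrite -ltr_pdivrMr.
    have h4 : (0 : R) <= n%:R by exact: ler0n.
    nra.
  move=> H; apply: lt_le_trans H _; apply: ler_wpM2l => //; exact: ltW.
have := ltr_pM2l p0 D (v * (16/15)^+n); rewrite hD => /esym H.
by move: H; rewrite mulrCA e mulr1.
Qed.

Lemma small_pow_C (De : nat) (V : C) : 0 < V ->
  exists n, (15%:R / 16%:R : C) ^+ n * De%:R < V.
Proof.
case: V => vr vi; rewrite ltcE /= => /andP [/eqP -> v0].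
have [n hn] := small_pow (De%:R) v0.
exists n.
have -> : (15%:R / 16%:R : C) ^+ n * De%:R = real_complex R ((15 / 16) ^+ n * De%:R).
  by rewrite rmorphM rmorphXn fmorph_div !rmorph_nat.
by rewrite ltcE /= eqxx.
Qed.

End Arch.

Section Main.
Variable R : realType.
Local Notation C := (R[i]).
Variable rnd : C -> C.
Variable z : C.
Variables (d Delta : nat) (h0 h : 'M[C]_2).
Hypothesis Hd : d \in dlist.
Hypothesis Hrnd : nearest_round d rnd.
Hypothesis Hn : forall beta : C, inOd d beta -> beta * beta^* <> Delta%:R.
Hypothesis Hh0 : inH d Delta h0.

Lemma class_good f : eqclass d h0 f -> goodH d Delta f.
Proof. by move=> [s [hs ->]]; apply: (goodH_act Hd) => //; apply: goodH_inH. Qed.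

Lemma class_act f s : eqclass d h0 f -> inGL2 d s -> eqclass d h0 (act s f).
Proof.
move=> [t [ht ->]] hs; exists (t *m s); split; first exact: inGL2_mul.
by rewrite act_comp.
Qed.

Hypothesis Ah : eqclass d h0 h.
Hypothesis h00 : h 0 0 < 0.
Hypothesis hz : 0 < hform h z 1.

Local Notation g n := (cf_gamma rnd z n).
Local Notation sg n := ((-1 : C) ^+ n).

Definition U n : 'M[C]_2 := \matrix_(i < 2, j < 2) (sg n *
  (if (i == 0) && (j == 0) then P1 rnd z n else if i == 0 then P2 rnd z n
   else if j == 0 then Q1 rnd z n else Q2 rnd z n)).

Lemma UE n : [/\ U n 0 0 = sg n * P1 rnd z n, U n 0 1 = sg n * P2 rnd z n,
  U n 1 0 = sg n * Q1 rnd z n & U n 1 1 = sg n * Q2 rnd z n].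
Proof. by rewrite !mxE. Qed.

Lemma sg2 n : sg n * sg n = 1.
Proof. by rewrite -exprMn mulrNN mulr1 expr1n. Qed.

Lemma Ug n : U n *m g n = 1.
Proof.
have [u00 u01 u10 u11] := UE n; have [g00 g01 g10 g11] := gammaE rnd z n.
have dt := pq_det rnd z n; have s2 := sg2 n.
apply: mx2_eq; rewrite !mulmx22 ?u00 ?u01 ?u10 ?u11 ?g00 ?g01 ?g10 ?g11 !mxE /=.
- by transitivity (sg n * (P1 rnd z n * Q2 rnd z n - P2 rnd z n * Q1 rnd z n));
    [ring | rewrite dt s2].
- ring.
- ring.
- by transitivity (sg n * (P1 rnd z n * Q2 rnd z n - P2 rnd z n * Q1 rnd z n));
    [ring | rewrite dt s2].
Qed.

Lemma U_GL n : inGL2 d (U n).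
Proof.
have [u00 u01 u10 u11] := UE n; have [h1 h2 h3 h4] := pq_Od z Hd Hrnd n.
have sgO : inOd d (sg n).
  by rewrite -signr_odd; case: (odd n); rewrite ?expr1 ?expr0;
  [apply: inOdN; exact: inOd1 | exact: inOd1].
have eU : forall i j, inOd d (U n i j).
  move=> i j; case: (ord2_cases i) => ->; case: (ord2_cases j) => ->;
  rewrite ?u00 ?u01 ?u10 ?u11; exact: (inOdM Hd).
split => //; split.
  by rewrite det22; apply: inOdB; apply: (inOdM Hd).
exists (\det (g n)); split.
  have [eg _] := gamma_GL z Hd Hrnd n.
  by rewrite det22; apply: inOdB; apply: (inOdM Hd).
by rewrite -det_mulmx Ug det1.
Qed.

Definition F n := act (conj_mx (U n)) h.

Lemma F_class n : eqclass d h0 (F n).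
Proof. by apply: class_act => //; apply: (inGL2_conj Hd); apply: U_GL. Qed.

Lemma F_good n : goodH d Delta (F n).
Proof. exact/class_good/F_class. Qed.

Lemma F_Phi n : act (conj_mx (g n)) (F n) = h.
Proof. by rewrite /F act_comp -conj_mxM Ug conj_mx1 act1. Qed.

Lemma F_V n : hform h z 1 = hform (F n) (E' rnd z n) (- E rnd z n).
Proof.
rewrite -{1}(F_Phi n) Phi_hform /f_at_gamma.
have [g00 g01 g10 g11] := gammaE rnd z n.
by rewrite g00 g01 g10 g11 /E /E'; congr hform; ring.
Qed.

Lemma F0 : F 0 = h.
Proof.
rewrite /F; have -> : U 0 = 1.
  have [u00 u01 u10 u11] := UE 0; have [e1 e2 e3 e4] := pq_0 rnd z.
  apply: mx2_eq; rewrite ?u00 ?u01 ?u10 ?u11 ?e1 ?e2 ?e3 ?e4 !mxE /= expr0 ?mulr1 ?mulr0 //.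
by rewrite conj_mx1 act1.
Qed.

Lemma F_shift k : F k.+1 1 1 = F k 0 0.
Proof.
rewrite /F act11 act00 !conj_mxE !conjCK.
have [u00 u01 u10 u11] := UE k; have [v00 v01 v10 v11] := UE k.+1.
rewrite v01 v11 u00 u10; have [-> _ -> _] := pq_S rnd z k.
rewrite exprS /hform; pushc; ring.
Qed.

Definition good n := (cf_z rnd z n.-1 != None) && (0 < F n 0 0).

Lemma ex_good : exists n, good n.
Proof.
have [n0 hn0] := small_pow_C Delta hz.
case: (E_bound z Hd Hrnd n0) => [[N [w [eN hw]]] | [hc hb]].
- exists N.+1; rewrite /good /= eN /=.
  have hE : E rnd z N.+1 = 0 by rewrite (E_step eN) -hw subrr oppr0 mul0r.
  have V := F_V N.+1; rewrite hE oppr0 in V.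
  have eV : hform h z 1 = F N.+1 0 0 * (E' rnd z N.+1 * (E' rnd z N.+1)^* ).
    by rewrite V /hform; pushc; ring.
  have [_ [r00 _]] := F_good N.+1.
  case: (boolP (0 < F N.+1 0 0)) => // nf; exfalso.
  have Fneg := real_neg r00 nf (goodH_nz Hn (F_good N.+1)).1.
  have H := mulr_le0_ge0 (ltW Fneg) (mul_conjC_ge0 (E' rnd z N.+1)).
  by rewrite -eV in H; move: (lt_le_trans hz H); rewrite ltxx.
- case e: (cf_z rnd z n0) hc => [w|] // _.
  case: (boolP (0 < F n0 0 0)) => pos.
    exists n0; rewrite /good pos andbT.
    have : cf_z rnd z n0.-1 <> None.
      case: n0 e {hb hn0 pos} => [|k] e; first by rewrite e.
      by apply: cf_z_down; rewrite e.
    by case: (cf_z rnd z n0.-1).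
  exfalso.
  have [_ [r00 _]] := F_good n0.
  have Fneg := real_neg r00 pos (goodH_nz Hn (F_good n0)).1.
  have X := goodH_bound Hd w (F_good n0) Fneg.
  have V := F_V n0; rewrite (E_rel e) in V.
  have eV : hform h z 1 = (E rnd z n0 * (E rnd z n0)^* ) * hform (F n0) w 1.
    by rewrite V /hform; pushc; ring.
  have H : hform h z 1 <= (15%:R / 16%:R) ^+ n0 * Delta%:R.
    rewrite eV; apply: le_trans (ler_wpM2l (mul_conjC_ge0 _) X) _.
    by apply: ler_wpM2r hb; exact: ler0n.
  by have := lt_le_trans hn0 H; rewrite ltxx.
Qed.

End Main.

Theorem proposition3p2 (R : realType) (d : nat) (Delta : nat)
  (rnd : R[i] -> R[i]) (z : R[i]) (A : 'M[R[i]]_2 -> Prop) :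
  d \in [:: 1; 2; 3; 7; 11]%N ->
  (0 < Delta)%N ->
  (forall beta : R[i], inOd d beta -> beta * beta^* <> Delta%:R) ->
  nearest_round d rnd ->
  (exists h0, inH d Delta h0 /\ A = eqclass d h0) ->
  let Az := fun h => A h /\ h 0 0 < 0 /\ 0 < hform h z 1 in
  let Ahat := fun f => A f /\ hform f 0 1 < 0 /\ 0 < f 0 0 in
  let Bz := fun f g => Ahat f /\ in_Gamma_z rnd z g /\
                       f_at_gamma_inf f g < 0 /\ 0 < f_at_gamma f g z in
  let Phi := fun f g => act (conj_mx g) f in
  (forall f g, Bz f g -> Az (Phi f g)) /\
  (forall h, Az h -> exists f g, Bz f g /\ Phi f g = h).
Proof.
move=> Hd HD Hn Hrnd [h0 [Hh0 ->]].
cbv beta zeta.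
split.
  move=> f g [[Af [f01 f00]] [[n [n0 [hzn ->]]] [hinf hat]]].
  split; [|split].
  - apply: (class_act Hd Af); apply: (inGL2_conj Hd); exact: gamma_GL.
  - by rewrite Phi00.
  - by rewrite Phi_hform.
move=> h [Ah [h00 hz]].
have exP := ex_good Hd Hrnd Hn Hh0 Ah hz.
case: (ex_minnP exP) => m /andP [hm1 hm2] hmin.
have m0 : (0 < m)%N.
  case: m hm1 hm2 hmin => // _; rewrite F0 => H.
  by move: (lt_trans H h00); rewrite ltxx.
exists (F rnd z h m), (cf_gamma rnd z m).
have ePhi := F_Phi rnd z h m.
split => //; split; [split; [|split] | split; [|split]].
- exact: F_class.
- rewrite hform01.
  case: m m0 hm1 hm2 hmin ePhi => // k _ hm1 hm2 hmin ePhi.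
  have [_ [_ [r11 _]]] := F_good z Hd Hrnd Hh0 Ah k.+1.
  apply: real_neg => //; last exact: (goodH_nz Hn (F_good z Hd Hrnd Hh0 Ah k.+1)).2.
  rewrite F_shift; apply/negP => pos.
  have : good rnd z h k.
    rewrite /good pos andbT.
    have : cf_z rnd z k.-1 <> None.
      have hk : cf_z rnd z k <> None by move: hm1 => /=; case: (cf_z rnd z k).
      case: (k) hk => [|j] //= hk; exact: cf_z_down.
    by case: (cf_z rnd z k.-1).
  by move/hmin; rewrite ltnn.
- exact: hm2.
- exists m; split => //; split => //; exact/eqP.
- by rewrite -Phi00 ePhi.
- by rewrite -Phi_hform ePhi.
Qed.
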